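(* Let $\mathfrak k$ be the maximal compact subalgebra of a Kac--Moody algebra over a field $F$ of characteristic $0$ with simply laced diagram $D=(V,E)$, with Berman generators $X_1,\dots,X_n$, and let $L=F(I)$ with $I^2=-1$. (a) If $\rho:\mathfrak k\to\operatorname{End}(L^s)$ is a generalized spin representation, then $\rho(X_i)\rho(X_j)=\rho(X_j)\rho(X_i)$ whenever $i\ne j$ and $\{v_i,v_j\}\notin E$, and $\rho(X_i)\rho(X_j)=-\rho(X_j)\rho(X_i)$ whenever $\{v_i,v_j\}\in E$. (b) Conversely, if $A_1,\dots,A_n\in L^{s\times s}$ satisfy $A_i^2=-\tfrac14\mathrm{id}_s$ for all $i$, $A_iA_j=A_jA_i$ for $i\ne j$ non-adjacent, and $A_iA_j=-A_jA_i$ for $v_i,v_j$ adjacent, then $X_i\mapsto A_i$ extends to a Lie algebra homomorphism $\mathfrak k\to\operatorname{End}(L^s)$, which is a generalized spin representation.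
   Context: Berman's theorem: $\mathfrak k$ is generated by $X_i=e_i-f_i$ and is the Lie algebra with generators $X_1,\dots,X_n$ and defining relations $[X_i,[X_i,X_j]]=-X_j$ if $v_i,v_j$ are adjacent and $[X_i,X_j]=0$ for non-adjacent $i\ne j$. Here $\mathfrak k$ is viewed as a Lie algebra over $F$ and $\operatorname{End}(L^s)$ as an $F$-Lie algebra with the commutator bracket. A generalized spin representation of $\mathfrak k$ is a Lie algebra homomorphism $\rho:\mathfrak k\to\operatorname{End}(L^s)$ (for some $s\ge1$) such that $\rho(X_i)^2=-\tfrac14\,\mathrm{id}_s$ for $i=1,\dots,n$. *)

(* Defs.v *)
From HB Require Import structures.
From mathcomp Require Import all_boot all_order all_algebra all_field.
Set Implicit Arguments. Unset Strict Implicit. Unset Printing Implicit Defensive.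
Import Order.TTheory GRing.Theory Num.Theory.
Local Open Scope ring_scope.

Record lieAlg (F : fieldType) := LieAlg {
  lie_car :> zmodType;
  lie_scale : F -> lie_car -> lie_car;
  lie_br : lie_car -> lie_car -> lie_car;
  lie_scaleDr : forall a x y, lie_scale a (x + y) = lie_scale a x + lie_scale a y;
  lie_scaleDl : forall a b x, lie_scale (a + b) x = lie_scale a x + lie_scale b x;
  lie_scaleA : forall a b x, lie_scale a (lie_scale b x) = lie_scale (a * b) x;
  lie_scale1 : forall x, lie_scale 1 x = x;
  lie_brl : forall a x y z,
      lie_br (lie_scale a x + y) z = lie_scale a (lie_br x z) + lie_br y z;
  lie_brr : forall a x y z,
      lie_br z (lie_scale a x + y) = lie_scale a (lie_br z x) + lie_br z y;
  lie_br_alt : forall x, lie_br x x = 0;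
  lie_jacobi : forall x y z,
      lie_br x (lie_br y z) + lie_br y (lie_br z x) + lie_br z (lie_br x y) = 0
}.

Definition lie_hom (F : fieldType) (M N : lieAlg F) (f : M -> N) : Prop :=
  (forall a x y, f (lie_scale a x + y) = lie_scale a (f x) + f y) /\
  (forall x y, f (lie_br x y) = lie_br (f x) (f y)).

Definition berman_rel (F : fieldType) (n : nat) (adj : rel 'I_n)
    (M : lieAlg F) (Y : 'I_n -> M) : Prop :=
  (forall i j, adj i j -> lie_br (Y i) (lie_br (Y i) (Y j)) = - Y j) /\
  (forall i j, i != j -> ~~ adj i j -> lie_br (Y i) (Y j) = 0).

Definition berman_presented (F : fieldType) (n : nat) (adj : rel 'I_n)
    (K : lieAlg F) (X : 'I_n -> K) : Prop :=
  berman_rel adj X /\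
  forall (M : lieAlg F) (Y : 'I_n -> M), berman_rel adj Y ->
    exists f : K -> M, [/\ lie_hom f, (forall i, f (X i) = Y i) &
      forall g : K -> M, lie_hom g -> (forall i, g (X i) = Y i) -> g =1 f].

(* Lie algebra homomorphisms K -> End(L^s) = L^{s x s}, where End(L^s) is an
   F-Lie algebra with scaling a *: A := (a%:A) *: A and commutator bracket. *)
Definition lie_hom_End (F : fieldType) (L : fieldExtType F) (s : nat)
    (K : lieAlg F) (rho : K -> 'M[L]_s) : Prop :=
  (forall a x y, rho (lie_scale a x + y) = (a%:A : L) *: rho x + rho y) /\
  (forall x y, rho (lie_br x y) = rho x *m rho y - rho y *m rho x).

Definition gen_spin_rep (F : fieldType) (L : fieldExtType F) (s n : nat)
    (K : lieAlg F) (X : 'I_n -> K) (rho : K -> 'M[L]_s) : Prop :=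
  lie_hom_End rho /\
  forall i, rho (X i) *m rho (X i) = (- (4%:R : L)^-1)%:M.

(* Main.v *)
Require Import Defs.
From HB Require Import structures.
From mathcomp Require Import all_boot all_order all_algebra all_field ring.
Import Order.TTheory GRing.Theory Num.Theory.
Local Open Scope ring_scope.
Lemma jac (Z : zmodType) (p q r t u v : Z) :
  (p - q - (r - t)) + (r - u - (v - q)) + (v - t - (p - u)) = 0.
Proof.
rewrite !opprB !addrA !subrK (addrAC (p - q) t (-u)) (addrAC (p-q-u) t q) addrK.
by rewrite (addrAC (p-q) (-u) q) !subrK subrr.
Qed.
Section E.
Variables (F : fieldType) (L : fieldExtType F) (s : nat).
Definition esc (a : F) (A : 'M[L]_s) := (a%:A : L) *: A.
Definition ebr (A B : 'M[L]_s) := A *m B - B *m A.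
Lemma e1 a x y : esc a (x + y) = esc a x + esc a y.
Proof. exact: scalerDr. Qed.
Lemma e2 a b x : esc (a + b) x = esc a x + esc b x.
Proof. by rewrite /esc scalerDl scalerDl. Qed.
Lemma e3 a b x : esc a (esc b x) = esc (a * b) x.
Proof. by rewrite /esc scalerA -scalerAl mul1r scalerA. Qed.
Lemma e4 x : esc 1 x = x.
Proof. by rewrite /esc scale1r scale1r. Qed.
Lemma e5 a x y z : ebr (esc a x + y) z = esc a (ebr x z) + ebr y z.
Proof.
rewrite /ebr /esc mulmxDl mulmxDr -scalemxAl -scalemxAr scalerBr opprD.
by rewrite addrACA.
Qed.
Lemma e6 a x y z : ebr z (esc a x + y) = esc a (ebr z x) + ebr z y.
Proof.
rewrite /ebr /esc mulmxDl mulmxDr -scalemxAl -scalemxAr scalerBr opprD.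
by rewrite addrACA.
Qed.
Lemma e7 x : ebr x x = 0.
Proof. exact: subrr. Qed.
Lemma e8 x y z : ebr x (ebr y z) + ebr y (ebr z x) + ebr z (ebr x y) = 0.
Proof.
rewrite /ebr !mulmxBr !mulmxBl !mulmxA.
exact: jac.
Qed.
Definition EndLie : lieAlg F := LieAlg e1 e2 e3 e4 e5 e6 e7 e8.
End E.

Lemma zA (Z : zmodType) (x w : Z) : w *+ 2 = x *+ 2 - (x - w - (w - x)).
Proof.
rewrite !opprB !mulr2n !addrA.
by rewrite (addrAC (x+x) w) addrK (addrAC (x+w) w) [x + w]addrC addrK.
Qed.
Lemma zB (Z : zmodType) (x : Z) : x - - x - (- x - x) = x *+ 4.
Proof. by rewrite !opprB !opprK !mulrS mulr0n addr0 !addrA. Qed.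
Lemma natL (F : fieldType) (charF0 : [pchar F] =i pred0) (L : fieldExtType F) k :
  (k.+1%:R : L) != 0.
Proof.
have -> : (k.+1%:R : L) = (k.+1%:R : F)%:A by rewrite -in_algE rmorph_nat.
rewrite scaler_eq0 oner_eq0 orbF.
by move/pcharf0P: charF0 => ->.
Qed.

Theorem mainTheorem5 (F : fieldType) (charF0 : [pchar F] =i pred0)
    (L : fieldExtType F) (I : L) (hI : I ^+ 2 = -1)
    (hL : (<<1%VS; I>>)%VS = fullv)
    (n : nat) (adj : rel 'I_n) (adj_sym : symmetric adj) (adj_irr : irreflexive adj)
    (K : lieAlg F) (X : 'I_n -> K) (hK : berman_presented adj X)
    (s : nat) (hs : (0 < s)%N) :
  (forall rho : K -> 'M[L]_s, gen_spin_rep X rho ->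
     (forall i j, i != j -> ~~ adj i j ->
        rho (X i) *m rho (X j) = rho (X j) *m rho (X i)) /\
     (forall i j, adj i j ->
        rho (X i) *m rho (X j) = - (rho (X j) *m rho (X i)))) /\
  (forall A : 'I_n -> 'M[L]_s,
     (forall i, A i *m A i = (- (4%:R : L)^-1)%:M) ->
     (forall i j, i != j -> ~~ adj i j -> A i *m A j = A j *m A i) ->
     (forall i j, adj i j -> A i *m A j = - (A j *m A i)) ->
     exists rho : K -> 'M[L]_s,
       (forall i, rho (X i) = A i) /\ lie_hom_End rho /\ gen_spin_rep X rho).
Proof.
have h4 : (4%:R : L) != 0 by exact: (@natL F charF0 L 3).
have h2 : (2%:R : L) != 0 by exact: (@natL F charF0 L 1).
set c : L := - (4%:R : L)^-1.
have c0 : c != 0 by rewrite oppr_eq0 invr_eq0.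
case: hK => [[hadj hnadj] huniv].
split.
  move=> rho [[hlin hbr] hsq].
  have rho0 : rho 0 = 0.
    have h := hlin 1 0 0; rewrite lie_scale1 addr0 !scale1r in h.
    by apply: (addrI (rho 0)); rewrite addr0 -h.
  have rhoN : forall x, rho (- x) = - rho x.
    move=> x; have h := hlin 1 x (-x); rewrite lie_scale1 subrr rho0 !scale1r in h.
    by apply/eqP; rewrite -addr_eq0 addrC -h.
  split.
    move=> i j ij nij; apply/eqP; rewrite -subr_eq0 -hbr hnadj //.
    by rewrite rho0.
  move=> i j ij.
  have E := hbr (X i) (lie_br (X i) (X j)).
  rewrite hadj // rhoN hbr mulmxBr mulmxBl !mulmxA hsq mul_scalar_mx in E.
  rewrite -[rho (X j) *m rho (X i) *m rho (X i)]mulmxA hsq mul_mx_scalar -/c in E.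
  set a := rho (X i) in E *; set b := rho (X j) in E *.
  set w := a *m b *m a in E.
  have hw : w = - c *: b.
    apply: (scalerI h2).
    rewrite [LHS]scaler_nat (zA _ (c *: b) w) -E opprK -scaler_nat scalerA.
    rewrite -[X in _ + X = _]scale1r -scalerDl scalerA; congr (_ *: _).
    by rewrite /c; field.
  have E2 : a *m w = a *m (- c *: b) by rewrite hw.
  rewrite /w !mulmxA hsq -mulmxA mul_scalar_mx -scalemxAr in E2.
  have E4 : c *: (b *m a) = - c *: (a *m b) by exact: E2.
  rewrite [RHS]scaleNr -[RHS]scalerN in E4; rewrite (scalerI c0 E4).
  by rewrite opprK.
move=> A hA hc hac.
have hrel : berman_rel adj (A : 'I_n -> @EndLie F L s).
  split.
    move=> i j ij; rewrite /= /ebr mulmxBr mulmxBl !mulmxA hA mul_scalar_mx.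
    rewrite -[A j *m A i *m A i]mulmxA hA mul_mx_scalar.
    rewrite -[A i *m A j *m A i]mulmxA (hac j i); last by rewrite adj_sym.
    rewrite mulmxN mulmxA hA mul_scalar_mx zB -scaler_nat scalerA.
    by rewrite -[RHS]scaleN1r; congr (_ *: _); rewrite /c mulrN mulfV.
  by move=> i j ij nij; rewrite /= /ebr hc // subrr.
have [f [fh fX _]] := huniv (@EndLie F L s) A hrel.
have fE : lie_hom_End (f : K -> 'M[L]_s) by exact: fh.
exists f; split; first exact: fX.
split; first exact: fE.
split; first exact: fE.
by move=> i; rewrite fX hA.
Qed.
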